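(* Let $G=(V,E)$ be a graph with $m\ge 1$ edges, let $d_v := \deg(v)/(2m)$ for $v\in V$, and let $p^\flat$ be the in-degree distribution of any biased orientation of $G$. Then $$\mathrm{OPT}(G) \ \ge\ \sum_{v\in V} -p^\flat_v \log\frac{\deg(v)}{m} \ =\ H(p^\flat) + D(p^\flat\parallel d) - 1,$$ where $D(p\parallel q) := \sum_{i} p_i\log(p_i/q_i)$ is the relative entropy.
   Context: All graphs are finite, undirected and loopless, but multiple edges are allowed. For an orientation $\vec G$ of $G$, the in-degree distribution is $p_v := \rho_{\vec G}(v)/m$, where $\rho_{\vec G}(v)$ is the in-degree of $v$. Entropy: $H(p) := \sum_{v} -p_v\log p_v$, $\log$ base $2$, $-0\log 0:=0$ (and in the relative entropy terms with $p_i=0$ are $0$). $\mathrm{OPT}(G)$ is the minimum entropy of the in-degree distribution of an orientation of $G$. An orientation is biased if each edge $vw$ with $\deg(v)>\deg(w)$ is oriented toward $v$. *)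

(* Defs.v *)
From Stdlib Require Import Reals List Arith.
Import ListNotations.
Open Scope R_scope.

(* A graph on vertex set {0,...,n-1} is a list of edges (u,w) (multi-edges
   allowed by repetition in the list). It is valid when every edge has both
   endpoints < n and is not a loop. *)
Definition graph := list (nat * nat).

Definition valid_graph (n : nat) (E : graph) : Prop :=
  Forall (fun e => (fst e < n)%nat /\ (snd e < n)%nat /\ fst e <> snd e) E.

Definition nedges (E : graph) : nat := length E.

(* degree: number of edges incident to v (loopless, so each counts once) *)
Definition deg (E : graph) (v : nat) : nat :=
  length (filter (fun e => orb (Nat.eqb (fst e) v) (Nat.eqb (snd e) v)) E).

(* An orientation is a list of booleans, one per edge (same length as E):
   for edge (u,w) with boolean b, the edge points toward w if b = true,
   toward u if b = false. *)
Definition orientation := list bool.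

Definition valid_orientation (E : graph) (o : orientation) : Prop :=
  length o = length E.

Definition ehead (e : nat * nat) (b : bool) : nat :=
  if b then snd e else fst e.

Definition indeg (E : graph) (o : orientation) (v : nat) : nat :=
  length (filter (fun eb => Nat.eqb (ehead (fst eb) (snd eb)) v) (combine E o)).

Definition indeg_dist (E : graph) (o : orientation) (v : nat) : R :=
  INR (indeg E o v) / INR (nedges E).

Definition log2 (x : R) : R := ln x / ln 2.

Definition vsum (n : nat) (f : nat -> R) : R :=
  fold_right Rplus 0 (map f (seq 0 n)).

Definition entropy (n : nat) (p : nat -> R) : R :=
  vsum n (fun v => if Req_EM_T (p v) 0 then 0 else - p v * log2 (p v)).

Definition rel_entropy (n : nat) (p q : nat -> R) : R :=
  vsum n (fun v => if Req_EM_T (p v) 0 then 0 else p v * log2 (p v / q v)).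

Fixpoint all_bool_lists (k : nat) : list (list bool) :=
  match k with
  | O => [ [] ]
  | S k' => map (cons true) (all_bool_lists k') ++ map (cons false) (all_bool_lists k')
  end.

Definition OPT (n : nat) (E : graph) : R :=
  match map (fun o => entropy n (indeg_dist E o)) (all_bool_lists (length E)) with
  | [] => 0
  | x :: xs => fold_left Rmin xs x
  end.

Definition biased (E : graph) (o : orientation) : Prop :=
  forall i e b, nth_error E i = Some e -> nth_error o i = Some b ->
    ((deg E (fst e) > deg E (snd e))%nat -> ehead e b = fst e) /\
    ((deg E (snd e) > deg E (fst e))%nat -> ehead e b = snd e).

(* Main.v *)
Require Import Defs.
From Stdlib Require Import Reals List Arith Lia Lra.
Open Scope R_scope.

Definition esum (l : list ((nat*nat)*bool)) (g : (nat*nat)*bool -> R) : R :=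
  fold_right Rplus 0 (map g l).

Definition cnt (l : list ((nat*nat)*bool)) (v : nat) : nat :=
  length (filter (fun eb => Nat.eqb (ehead (fst eb) (snd eb)) v) l).

Lemma lsum_plus (L : list nat) f g :
  fold_right Rplus 0 (map (fun v => f v + g v) L) =
  fold_right Rplus 0 (map f L) + fold_right Rplus 0 (map g L).
Proof. induction L; simpl; [ring| rewrite IHL; ring]. Qed.

Lemma lsum_zero_below (h : nat) f s k : (h < s)%nat ->
  fold_right Rplus 0 (map (fun v => if Nat.eqb h v then f v else 0) (seq s k)) = 0.
Proof.
  revert s; induction k; intros s Hs; simpl; [reflexivity|].
  destruct (Nat.eqb_spec h s); [lia|]. rewrite IHk by lia. ring.
Qed.

Lemma lsum_ind (h : nat) f s k : (s <= h < s + k)%nat ->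
  fold_right Rplus 0 (map (fun v => if Nat.eqb h v then f v else 0) (seq s k)) = f h.
Proof.
  revert s; induction k; intros s Hs; simpl; [lia|].
  destruct (Nat.eqb_spec h s).
  - subst. rewrite lsum_zero_below by lia. ring.
  - rewrite IHk by lia. ring.
Qed.

Lemma dc n (l : list ((nat*nat)*bool)) (f : nat -> R) :
  (forall eb, In eb l -> (ehead (fst eb) (snd eb) < n)%nat) ->
  vsum n (fun v => INR (cnt l v) * f v) = esum l (fun eb => f (ehead (fst eb) (snd eb))).
Proof.
  unfold vsum, esum. induction l as [|eb l IH]; intros H.
  - simpl. generalize (seq 0 n). induction l; simpl; [reflexivity| rewrite IHl; ring].
  - rewrite (map_ext (fun v => INR (cnt (eb :: l) v) * f v)
       (fun v => (if Nat.eqb (ehead (fst eb) (snd eb)) v then f v else 0) + INR (cnt l v) * f v)).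
    + rewrite lsum_plus, lsum_ind, IH.
      * simpl. reflexivity.
      * intros; apply H; simpl; auto.
      * specialize (H eb (or_introl eq_refl)). lia.
    + intros v. unfold cnt. cbn [filter length].
      destruct (Nat.eqb (ehead (fst eb) (snd eb)) v); cbn [length]; [rewrite S_INR|]; ring.
Qed.

Lemma indeg_le_deg E o v : (indeg E o v <= deg E v)%nat.
Proof.
  revert o; induction E as [|e E IH]; intros o; unfold indeg, deg in *; [simpl; lia|].
  destruct o as [|b o]; simpl; [lia|]. specialize (IH o).
  destruct e as [x y]; destruct b; simpl;
  destruct (Nat.eqb x v) eqn:Hx; destruct (Nat.eqb y v) eqn:Hy; simpl; lia.
Qed.

Lemma deg_pos E e v : In e E -> (fst e = v \/ snd e = v) -> (1 <= deg E v)%nat.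
Proof.
  intros Hin Hv. unfold deg.
  assert (In e (filter (fun e => orb (Nat.eqb (fst e) v) (Nat.eqb (snd e) v)) E)).
  { apply filter_In. split; auto. destruct Hv as [->| ->];
    rewrite Nat.eqb_refl; [reflexivity| apply Bool.orb_true_r]. }
  destruct (filter _ E); simpl in *; [contradiction| lia].
Qed.

Lemma cnt_pos l eb : In eb l -> (1 <= cnt l (ehead (fst eb) (snd eb)))%nat.
Proof.
  intros Hin. unfold cnt.
  assert (In eb (filter (fun eb0 => Nat.eqb (ehead (fst eb0) (snd eb0)) (ehead (fst eb) (snd eb))) l)).
  { apply filter_In. split; auto. apply Nat.eqb_refl. }
  destruct (filter _ l); simpl in *; [contradiction| lia].
Qed.

Lemma log2_le x y : 0 < x -> x <= y -> log2 x <= log2 y.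
Proof.
  intros Hx Hxy. unfold log2. assert (0 < ln 2) by (pose proof ln_lt_2; lra).
  unfold Rdiv. apply Rmult_le_compat_r; [left; apply Rinv_0_lt_compat; auto|].
  destruct Hxy as [Hlt| ->]; [left; apply ln_increasing; auto| right; reflexivity].
Qed.

Lemma term_rw E o v L : 0 < INR (nedges E) ->
  (if Req_EM_T (indeg_dist E o v) 0 then 0 else - indeg_dist E o v * L)
  = INR (indeg E o v) * (- L / INR (nedges E)).
Proof.
  intros Hm. unfold indeg_dist. destruct (Req_EM_T _ 0) as [H|H].
  - assert (INR (indeg E o v) = 0).
    { apply (Rmult_eq_reg_r (/ INR (nedges E))); [|apply Rinv_neq_0_compat; lra].
      rewrite Rmult_0_l. exact H. }
    rewrite H0; ring.
  - field. lra.
Qed.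

Lemma esum_le E o o' g :
  length o = length E -> length o' = length E ->
  (forall i e b b', nth_error E i = Some e -> nth_error o i = Some b ->
      nth_error o' i = Some b' -> g (e, b) <= g (e, b')) ->
  esum (combine E o) g <= esum (combine E o') g.
Proof.
  unfold esum. revert o o'; induction E as [|e E IH]; intros o o' H1 H2 H.
  - simpl. lra.
  - destruct o as [|b o]; [discriminate|]. destruct o' as [|b' o']; [discriminate|].
    simpl. apply Rplus_le_compat.
    + apply (H 0%nat); reflexivity.
    + apply IH; try (simpl in *; lia). intros i e0 c c' A B C. apply (H (S i)); assumption.
Qed.

Lemma fold_min xs x S : x >= S -> (forall y, In y xs -> y >= S) -> fold_left Rmin xs x >= S.
Proof.
  revert x; induction xs; intros x Hx H; simpl; auto.
  apply IHxs; [|intros; apply H; simpl; auto].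
  unfold Rmin. destruct (Rle_dec x a); auto. apply H; simpl; auto.
Qed.

Lemma all_bool_len k o : In o (all_bool_lists k) -> length o = k.
Proof.
  revert o; induction k; simpl; intros o H.
  - destruct H as [<-|[]]; reflexivity.
  - apply in_app_or in H. destruct H as [H|H]; apply in_map_iff in H;
    destruct H as [x [<- Hx]]; simpl; f_equal; auto.
Qed.

Lemma all_bool_ne k : exists o, In o (all_bool_lists k).
Proof.
  induction k; simpl; [eauto|]. destruct IHk as [o Ho]. exists (true :: o).
  apply in_or_app. left. apply in_map. auto.
Qed.

Lemma sum_indeg n E o : valid_graph n E -> length o = length E ->
  vsum n (fun v => INR (indeg E o v) * 1) = INR (nedges E).
Proof.
  intros Hv Ho. change (indeg E o) with (cnt (combine E o)). rewrite dc.
  - unfold esum, nedges.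
    assert (Hl : length (combine E o) = length E) by (rewrite length_combine; lia).
    rewrite <- Hl. generalize (combine E o). induction l; [reflexivity|].
    cbn [map fold_right length]. rewrite IHl, S_INR. ring.
  - intros [e b] Hin. simpl. apply in_combine_l in Hin.
    unfold valid_graph in Hv. rewrite Forall_forall in Hv. destruct (Hv e Hin) as [A [B _]].
    destruct b; simpl; auto.
Qed.

Lemma esum_le_in l g h : (forall eb, In eb l -> g eb <= h eb) -> esum l g <= esum l h.
Proof.
  unfold esum; induction l; intros H; simpl; [lra|].
  apply Rplus_le_compat; [apply H; simpl; auto| apply IHl; intros; apply H; simpl; auto].
Qed.

Lemma lsum_scal (L : list nat) c f :
  fold_right Rplus 0 (map (fun v => c * f v) L) = c * fold_right Rplus 0 (map f L).
Proof. induction L; simpl; [ring| rewrite IHL; ring]. Qed.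

Lemma vsum_ext n f g : (forall v, f v = g v) -> vsum n f = vsum n g.
Proof. intros H; unfold vsum; rewrite (map_ext f g H); reflexivity. Qed.

Lemma ent_rw n E o (L : nat -> R) : valid_graph n E -> length o = length E ->
  0 < INR (nedges E) ->
  vsum n (fun v => if Req_EM_T (indeg_dist E o v) 0 then 0 else - indeg_dist E o v * L v)
  = esum (combine E o) (fun eb => - L (ehead (fst eb) (snd eb)) / INR (nedges E)).
Proof.
  intros Hv Ho Hm. rewrite (vsum_ext _ _ (fun v => INR (indeg E o v) * (- L v / INR (nedges E)))).
  2:{ intros v. apply term_rw; auto. }
  change (indeg E o) with (cnt (combine E o)). rewrite dc; [reflexivity|].
  intros [e b] Hin. simpl. apply in_combine_l in Hin.
  unfold valid_graph in Hv. rewrite Forall_forall in Hv. destruct (Hv e Hin) as [A [B _]].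
  destruct b; simpl; auto.
Qed.

Theorem mainTheorem4 (n : nat) (E : graph) (o : orientation) :
  valid_graph n E ->
  (1 <= nedges E)%nat ->
  valid_orientation E o ->
  biased E o ->
  let m := INR (nedges E) in
  let d := fun v => INR (deg E v) / (2 * m) in
  let p := indeg_dist E o in
  let S := vsum n (fun v => if Req_EM_T (p v) 0 then 0
                            else - p v * log2 (INR (deg E v) / m)) in
  OPT n E >= S /\ S = entropy n p + rel_entropy n p d - 1.
Proof.
  intros Hv Hm Ho Hb m d p S.
  assert (Hm0 : 0 < m) by (apply lt_0_INR; lia).
  assert (HS : S = esum (combine E o) (fun eb => - log2 (INR (deg E (ehead (fst eb) (snd eb))) / m) / m)).
  { apply (ent_rw n E o (fun v => log2 (INR (deg E v) / m))); auto. }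
  split.
  - unfold OPT. destruct (all_bool_ne (length E)) as [o0 Ho0].
    assert (LB : forall o', In o' (all_bool_lists (length E)) -> entropy n (indeg_dist E o') >= S).
    { intros o' Hin. apply all_bool_len in Hin.
      unfold entropy. rewrite (ent_rw n E o' (fun v => log2 (indeg_dist E o' v))); auto.
      rewrite HS. apply Rle_ge. apply Rle_trans with (esum (combine E o') (fun eb => - log2 (INR (deg E (ehead (fst eb) (snd eb))) / m) / m)).
      2:{ apply esum_le_in. intros [e b] Hin'. simpl.
          pose proof (cnt_pos _ _ Hin') as Hc. simpl in Hc.
          pose proof (indeg_le_deg E o' (ehead e b)) as Hid.
          change (cnt (combine E o') (ehead e b)) with (indeg E o' (ehead e b)) in Hc.
          unfold Rdiv. apply Rmult_le_compat_r; [left; apply Rinv_0_lt_compat; auto|].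
          apply Ropp_le_contravar. apply log2_le.
          - unfold indeg_dist. apply Rdiv_lt_0_compat; auto. apply lt_0_INR; lia.
          - unfold indeg_dist. apply Rmult_le_compat_r; [left; apply Rinv_0_lt_compat; auto|].
            apply le_INR; auto. }
      apply esum_le; auto. intros i e b b' He Hb1 Hb2. simpl.
      assert (HinE : In e E) by (eapply nth_error_In; eauto).
      destruct (Hb i e b He Hb1) as [B1 B2].
      assert (Hne : fst e <> snd e).
      { unfold valid_graph in Hv. rewrite Forall_forall in Hv. apply Hv; auto. }
      assert (Hdeg : (deg E (ehead e b') <= deg E (ehead e b))%nat).
      { destruct b, b'; simpl in *; try lia. }
      assert (Hp : (1 <= deg E (ehead e b'))%nat).
      { apply (deg_pos E e); auto. destruct b'; simpl; auto. }
      unfold Rdiv. apply Rmult_le_compat_r; [left; apply Rinv_0_lt_compat; auto|].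
      apply Ropp_le_contravar. apply log2_le.
      - apply Rdiv_lt_0_compat; auto. apply lt_0_INR; lia.
      - apply Rmult_le_compat_r; [left; apply Rinv_0_lt_compat; auto|]. apply le_INR; auto. }
    destruct (map _ _) as [|x xs] eqn:Hmap.
    + exfalso. apply (in_map (fun o => entropy n (indeg_dist E o))) in Ho0.
      rewrite Hmap in Ho0. destruct Ho0.
    + assert (All : forall y, In y (x :: xs) -> y >= S).
      { intros y Hy. rewrite <- Hmap in Hy. apply in_map_iff in Hy.
        destruct Hy as [o' [<- Ho']]. apply LB; auto. }
      apply fold_min; [apply All; simpl; auto| intros; apply All; simpl; auto].
  - assert (H1 : vsum n (fun v => INR (indeg E o v) * 1) = m) by (apply sum_indeg; auto).
    assert (Hl2 : 0 < ln 2) by (pose proof ln_lt_2; lra).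
    assert (PW : forall v, (if Req_EM_T (p v) 0 then 0 else - p v * log2 (INR (deg E v) / m))
      = ((if Req_EM_T (p v) 0 then 0 else - p v * log2 (p v))
         + (if Req_EM_T (p v) 0 then 0 else p v * log2 (p v / d v)))
         + (-1 / m) * (INR (indeg E o v) * 1)).
    { intros v. unfold p, d, indeg_dist. fold m.
      destruct (Req_EM_T _ 0) as [H|H].
      - assert (INR (indeg E o v) = 0).
        { apply (Rmult_eq_reg_r (/ m)); [|apply Rinv_neq_0_compat; lra].
          rewrite Rmult_0_l. exact H. }
        rewrite H0; field; lra.
      - pose proof (indeg_le_deg E o v) as Hid. apply le_INR in Hid.
        pose proof (pos_INR (indeg E o v)) as Ha.
        assert (Ha' : INR (indeg E o v) <> 0).
        { intros Z. apply H. rewrite Z. unfold Rdiv; ring. }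
        set (a := INR (indeg E o v)) in *. set (g := INR (deg E v)) in *.
        assert (Hap : 0 < a) by lra. assert (Hg : 0 < g) by lra.
        unfold log2.
        replace (a / m / (g / (2 * m))) with ((a / m) * (2 * / (g / m))) by (field; lra).
        assert (0 < a / m) by (apply Rdiv_lt_0_compat; lra).
        assert (0 < g / m) by (apply Rdiv_lt_0_compat; lra).
        rewrite ln_mult, ln_mult, ln_Rinv; try lra.
        2:{ apply Rinv_0_lt_compat; lra. }
        2:{ apply Rmult_lt_0_compat; [lra| apply Rinv_0_lt_compat; lra]. }
        field. split; lra. }
    unfold S, entropy, rel_entropy. rewrite (vsum_ext _ _ _ PW). unfold vsum.
    rewrite !lsum_plus, lsum_scal.
    fold (vsum n (fun v => INR (indeg E o v) * 1)). rewrite H1. field. lra.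
Qed.
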